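(* Let $G$ be a finite group such that the star class of $\mathcal{P}(G)$ is $\mathcal{S}=\{1\}$. Let $C=[y]_{\mathtt{N}}$ be a critical class. Then there exists $x\in G\setminus\hat{C}$ such that $|[x]_{\mathtt{N}}|\leq|C|$ and $x$ is adjacent to $y$ in $\mathcal{P}(G)$ if and only if $C$ is of the first type.
   Context: $o(g)$ is the order of $g$. The power graph $\mathcal{P}(G)$ has vertex set $G$, and distinct $x,y$ are adjacent iff one is a positive integer power of the other. $N[x]$ is the closed neighbourhood of $x$ in $\mathcal{P}(G)$. $x\mathtt{N}y$ iff $N[x]=N[y]$, with classes $[x]_{\mathtt{N}}$; $x\diamond y$ iff $\langle x\rangle=\langle y\rangle$. The star class $\mathcal{S}=[1]_{\mathtt{N}}$ is the set of vertices adjacent to all other vertices. An $\mathtt{N}$-class $C\ne\mathcal{S}$ is of the first type if it is also a $\diamond$-class. For $X\subseteq G$, $N[X]:=\bigcap_{x\in X}N[x]$ and $\hat{X}:=N[N[X]]$. A critical class is an $\mathtt{N}$-class $C$ with $\hat{C}=C\cup\{1\}$ such that $|\hat{C}|=p^r$ for some prime $p$ and integer $r\geq2$. *)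

(* Defs.v *)
From mathcomp Require Import all_boot all_fingroup.
Set Implicit Arguments. Unset Strict Implicit. Unset Printing Implicit Defensive.
Local Open Scope group_scope.

Section PowerGraph.
Variable gT : finGroupType.

(* x is a positive integer power of y: x = y^k for some k >= 1.
   Since y ^+ #[y] = 1, it suffices to let k range over 1..#[y]. *)
Definition is_pow (x y : gT) : bool := [exists k : 'I_#[y], x == y ^+ k.+1].

Definition padj (x y : gT) : bool := (x != y) && (is_pow x y || is_pow y x).

Definition Nb (x : gT) : {set gT} := [set z | (z == x) || padj x z].

Definition Nclass (x : gT) : {set gT} := [set z | Nb z == Nb x].

Definition Dclass (x : gT) : {set gT} := [set z | <[z]> == <[x]>].

Definition star_class : {set gT} := Nclass 1.

Definition NX (X : {set gT}) : {set gT} := \bigcap_(x in X) Nb x.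
Definition hat (X : {set gT}) : {set gT} := NX (NX X).

Definition first_type (C : {set gT}) : Prop :=
  (exists y, C = Nclass y) /\ C != star_class /\ exists x, C = Dclass x.

Definition critical (C : {set gT}) : Prop :=
  (exists y, C = Nclass y) /\ hat C = C :|: [set 1] /\
  exists p r : nat, prime p /\ (2 <= r)%N /\ #|hat C| = (p ^ r)%N.

End PowerGraph.

(* Main.v *)
Require Import Defs.
From mathcomp Require Import all_boot all_fingroup.
From mathcomp Require Import cyclic pgroup.
Set Implicit Arguments. Unset Strict Implicit. Unset Printing Implicit Defensive.
Local Open Scope group_scope.

Section Aux.
Variable gT : finGroupType.
Implicit Types x y z t u w : gT.

Lemma is_powE x y : is_pow x y = (x \in <[y]>).
Proof.
apply/existsP/idP => [[k /eqP ->]|]; first exact: mem_cycle.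
case/cycleP => i ->; rewrite -expg_mod_order.
have ho := order_gt0 y.
case E: (i %% #[y]) => [|j].
  have hp : #[y].-1 < #[y] by rewrite prednK.
  by exists (Ordinal hp); rewrite /= prednK // expg0 expg_order.
have hj : j < #[y] by have := ltn_mod i #[y]; rewrite E ho; apply: ltnW.
by exists (Ordinal hj).
Qed.

Lemma NbE x z : (z \in Nb x) = (z \in <[x]>) || (x \in <[z]>).
Proof.
rewrite inE /padj !is_powE; case: (eqVneq z x) => [->|ne]; first by rewrite cycle_id.
by rewrite /= orbC.
Qed.

Lemma Nb_cycle x z : <[x]> = <[z]> -> Nb x = Nb z.
Proof.
move=> E; apply/setP => w; rewrite !NbE E -!cycle_subG E //.
Qed.

Lemma NclassE y z : (z \in Nclass y) = (Nb z == Nb y).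
Proof. by rewrite inE. Qed.

Lemma Nclass_id y : y \in Nclass y.
Proof. by rewrite NclassE. Qed.

Lemma Dclass_sub x : Dclass x \subset Nclass x.
Proof.
apply/subsetP => z; rewrite inE NclassE => /eqP E; apply/eqP; exact: Nb_cycle.
Qed.

Lemma card_Dclass x : #|Dclass x| = totient #[x].
Proof.
rewrite totient_gen; apply: eq_card => z; rewrite !inE /generator eq_sym //.
Qed.

Lemma NX_Nclass y : NX (Nclass y) = Nb y.
Proof.
apply/setP => u; apply/bigcapP/idP => [H|H w]; first exact: H (Nclass_id y).
by rewrite NclassE => /eqP ->.
Qed.

Lemma hatP y u :
  reflect (forall w, w \in Nb y -> u \in Nb w) (u \in hat (Nclass y)).
Proof. by rewrite /hat NX_Nclass; apply: (iffP bigcapP). Qed.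

Lemma cyc_dvd y a b : a \in <[y]> -> b \in <[y]> ->
  (a \in <[b]>) = (#[a] %| #[b]).
Proof.
move=> ha hb; rewrite -cycle_subG (cardSg_cyclic (cycle_cyclic y)) //;
  by rewrite cycle_subG.
Qed.

Lemma chain t p a u w : prime p -> #[t] = (p ^ a)%N ->
  u \in <[t]> -> w \in <[t]> -> (u \in <[w]>) || (w \in <[u]>).
Proof.
move=> pp ot hu hw; rewrite !(cyc_dvd hu hw) (cyc_dvd hw hu).
have: #[u] %| p ^ a by rewrite -ot; apply: cardSg; rewrite cycle_subG.
have: #[w] %| p ^ a by rewrite -ot; apply: cardSg; rewrite cycle_subG.
case/(dvdn_pfactor _ _ pp) => j _ -> /(dvdn_pfactor _ _ pp) [i _ ->].
rewrite !dvdn_Pexp2l ?prime_gt1 //; exact: leq_total.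
Qed.

Lemma hat_sub y t p a : prime p -> #[t] = (p ^ a)%N -> t \in Nclass y ->
  <[t]> \subset hat (Nclass y).
Proof.
move=> pp ot; rewrite NclassE => /eqP E; apply/subsetP => u hu; apply/hatP => w.
rewrite -E NbE => /orP [hw|hw].
  by rewrite NbE; exact: chain pp ot hu hw.
by rewrite NbE; apply/orP; left; rewrite -cycle_subG in hw; apply: (subsetP hw).
Qed.

Lemma totient_ge q n : prime q -> q %| n -> 0 < n -> q.-1 <= totient n.
Proof.
move=> pq qn n0; case: (pfactor_coprime pq n0) => m cm E.
have a0 : 0 < logn q n by rewrite logn_gt0 mem_primes pq n0.
have m0 : 0 < m by move: n0; rewrite E muln_gt0 => /andP[].
rewrite E totient_coprime; last by rewrite coprime_sym; apply: coprimeXl.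
rewrite totient_pfactor // -[q.-1]mul1n leq_mul // ?totient_gt0 //.
by rewrite mul1n leq_pmulr // expn_gt0 prime_gt0.
Qed.


Lemma orderXdiv2 (a : gT) d : d %| #[a] -> #[a ^+ (#[a] %/ d)] = d.
Proof.
move=> H; have E := divnK H; set k := #[a] %/ d in E *.
have k0 : 0 < k.
  by move: (order_gt0 a); rewrite -E muln_gt0 => /andP[].
rewrite orderXdiv; last by rewrite -E dvdn_mulr.
by rewrite -{1}E mulKn.
Qed.

Lemma NbC y c : c \in Nclass y -> Nb c = Nb y.
Proof. by rewrite NclassE => /eqP. Qed.

Lemma C1 (HS : star_class gT = [set 1]) y z :
  z \in Nclass y -> z = 1 -> y = 1.
Proof.
move=> zC z1; apply/set1P; rewrite -HS /star_class NclassE -(NbC zC) z1 //.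
Qed.

Lemma notin1 (HS : star_class gT = [set 1]) y p r :
  prime p -> 0 < r -> hat (Nclass y) = Nclass y :|: [set 1] ->
  #|hat (Nclass y)| = (p ^ r)%N -> 1 \notin Nclass y.
Proof.
move=> pp r0 Hh Hc; apply/negP => oC.
have y1 := C1 HS oC (erefl _).
move: Hc; rewrite Hh (_ : Nclass y = [set 1]); last by rewrite -HS y1.
rewrite setUid cards1 => E.
have : 1 < p ^ r by rewrite -(expn0 p) ltn_exp2l ?prime_gt1.
by rewrite -E.
Qed.


Lemma fwd (HS : star_class gT = [set 1]) y p r :
  prime p -> 2 <= r -> hat (Nclass y) = Nclass y :|: [set 1] ->
  #|hat (Nclass y)| = (p ^ r)%N ->
  forall x, x \notin hat (Nclass y) -> #|Nclass x| <= #|Nclass y| -> padj x y ->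
  forall z, z \in Nclass y -> <[z]> = <[y]>.
Proof.
move=> pp r2 Hh Hc x hx hcard hadj z zC.
set C := Nclass y in Hh Hc hx hcard zC *.
have nC1 : 1 \notin C by apply: (notin1 HS pp _ Hh Hc); apply: leq_trans r2.
apply/eqP; apply: contraT => nzy.
have [t tC tmax] := @arg_maxnP _ y (fun t => t \in C) (fun t => #[t]) (Nclass_id y).
have Csub : forall c, c \in C -> c \in <[t]>.
  move=> c cC; have := NbC cC; rewrite -(NbC tC) => E.
  have : c \in Nb c by rewrite NbE cycle_id.
  rewrite E NbE => /orP [//|tc].
  have /eqP -> : <[t]> == <[c]>.
    by rewrite eqEcard cycle_subG tc /= -!orderE; apply: tmax.
  exact: cycle_id.
have [k kC nkt] : exists2 k, k \in C & <[k]> != <[t]>.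
  case: (eqVneq <[y]> <[t]>) => [e|ne]; last by exists y => //; exact: Nclass_id.
  by exists z => //; rewrite -e.
have kt := Csub k kC.
have k1 : k != 1 by apply: contraNneq nC1 => <-.
have pq : prime (pdiv #[k]) by apply: pdiv_prime; rewrite order_gt1.
set q := pdiv #[k] in pq.
have qk : q %| #[k] := pdiv_dvd _.
have Ekt : Nb k = Nb t by rewrite (NbC kC) (NbC tC).
have hq' : t.`_q^' \in <[k]>.
  have : t.`_q^' \in Nb k by rewrite Ekt NbE cycle_constt.
  rewrite NbE => /orP [//|kq'].
  have : q^'.-nat #[k].
    apply: pnat_dvd (p_elt_constt q^' t); apply: cardSg; by rewrite cycle_subG.
  move=> /(pnat_dvd qk); rewrite pnatE // !inE eqxx //.
have kq : k \in <[t.`_q]>.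
  have : t.`_q \in Nb k by rewrite Ekt NbE cycle_constt.
  rewrite NbE => /orP [tqk|//].
  have : t \in <[k]> by rewrite -(consttC q t) groupM.
  rewrite -cycle_subG => tk.
  by move: nkt; rewrite eqEsubset tk cycle_subG kt.
have qt : q.-nat #[t].
  apply: pnat_dvd (p_elt_constt q t); apply: cardSg; rewrite cycle_subG.
  rewrite -[X in X \in _](consttC q t) groupM ?cycle_id //.
  by rewrite -cycle_subG in kq; apply: (subsetP kq).
have [a ta] := p_natP qt.
have ht : hat C = <[t]>.
  apply/eqP; rewrite eqEsubset (hat_sub pq ta tC) andbT.
  apply/subsetP => u; rewrite Hh in_setU in_set1 => /orP [/Csub //|/eqP ->]; exact: group1.
have ot : #[t] = (p ^ r)%N by rewrite orderE -ht.
have {}hx : x \notin <[t]> by rewrite -ht.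
move: hadj; rewrite /padj !is_powE => /andP [_ /orP [xy|yx]].
  have yt : <[y]> \subset <[t]> by rewrite cycle_subG Csub ?Nclass_id.
  by rewrite (subsetP yt _ xy) in hx.
have : x \in Nb t by rewrite (NbC tC) NbE yx orbT.
rewrite NbE (negbTE hx) /= => tx.
have stx : <[t]> \subset <[x]> by rewrite cycle_subG.
have dtx : #[t] %| #[x] by apply: cardSg.
have p1 := prime_gt1 pp.
case: r r2 Hh Hc ot => [|[|r']] // _ Hh Hc ot.
have dpt : p %| #[t] by rewrite ot expnS dvdn_mulr.
set c := t ^+ (#[t] %/ p).
have oc : #[c] = p by apply: orderXdiv2.
have cC : c \in C.
  have : c \in hat C by rewrite ht mem_cycle.
  rewrite Hh in_setU in_set1 => /orP [//|/eqP c1].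
  by move: oc; rewrite c1 order1 => p1'; move: p1; rewrite -p1'.
have px : p.-nat #[x].
  apply/pnatP => // p' pp' dx; rewrite !inE.
  apply: contraT => np.
  have cop : coprime p p' by rewrite prime_coprime // dvdn_prime2 // eq_sym.
  have dpp : p * p' %| #[x] by rewrite Gauss_dvd // dx (dvdn_trans dpt dtx).
  set v := x ^+ (#[x] %/ (p * p')).
  have ov : #[v] = (p * p')%N by apply: orderXdiv2.
  have cx : c \in <[x]> by apply: (subsetP stx); apply: mem_cycle.
  have cv : c \in <[v]> by rewrite (cyc_dvd cx (mem_cycle _ _)) oc ov dvdn_mulr.
  have : v \in Nb t by rewrite (NbC tC) -(NbC cC) NbE cv orbT.
  rewrite NbE => /orP [vt|tv].
    have : #[v] %| #[t] by apply: cardSg; rewrite cycle_subG.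
    rewrite ov ot => /(dvdn_trans (dvdn_mull p (dvdnn p'))).
    by rewrite Euclid_dvdX // dvdn_prime2 // (negbTE np).
  have : #[t] %| #[v] by apply: cardSg; rewrite cycle_subG.
  rewrite ov ot expnS dvdn_pmul2l ?prime_gt0 // => H.
  have : p %| p' by apply: dvdn_trans H; rewrite expnS dvdn_mulr.
  by rewrite dvdn_prime2 // eq_sym (negbTE np).
have [e xe] := p_natP px.
have le : r'.+2 <= e by rewrite -(dvdn_Pexp2l _ _ p1) -ot -xe.
have ne : r'.+2 != e.
  apply/eqP => E; move: hx.
  have tx' : <[t]> == <[x]>.
    by rewrite eqEcard stx /=; change (#[x] <= #[t]); rewrite xe ot E.
  by rewrite (eqP tx') cycle_id.
have tot : p ^ r'.+2 <= totient #[x].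
  have lt : r'.+2 < e by rewrite ltn_neqAle ne le.
  rewrite xe totient_pfactor //; last exact: leq_trans lt.
  apply: (leq_trans _ (leq_pmull _ _)); last by rewrite -subn1 subn_gt0.
  by rewrite leq_exp2l // -ltnS prednK // (leq_trans _ lt).
have cx : totient #[x] <= #|Nclass x|.
  by rewrite -card_Dclass subset_leq_card ?Dclass_sub.
have cy : #|C|.+1 = (p ^ r'.+2)%N by rewrite -Hc Hh setUC cardsU1 nC1.
have := leq_trans tot (leq_trans cx hcard).
by rewrite -cy ltnn.
Qed.


Lemma bwd (HS : star_class gT = [set 1]) y p r :
  prime p -> 2 <= r -> hat (Nclass y) = Nclass y :|: [set 1] ->
  #|hat (Nclass y)| = (p ^ r)%N -> Nclass y = Dclass y ->
  exists x, x \notin hat (Nclass y) /\ #|Nclass x| <= #|Nclass y| /\ padj x y.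
Proof.
move=> pp r2 Hh Hc HD.
have nC1 : 1 \notin Nclass y by apply: (notin1 HS pp _ Hh Hc); apply: leq_trans r2.
have y1 : y != 1 by apply: contraNneq nC1 => <-; exact: Nclass_id.
have n1 : 1 < #[y] by rewrite order_gt1.
have n0 := order_gt0 y.
have pq : prime (pdiv #[y]) by apply: pdiv_prime.
set q := pdiv #[y] in pq.
have qn : q %| #[y] := pdiv_dvd _.
case: (boolP (q.-nat #[y])) => [qnat | nqn].
  have [a ya] := p_natP qnat.
  have ht : hat (Nclass y) = <[y]>.
    apply/eqP; rewrite eqEsubset (hat_sub pq ya (Nclass_id y)) andbT.
    apply/subsetP => u; rewrite Hh in_setU in_set1 HD inE => /orP [/eqP <-|/eqP ->].
      exact: cycle_id.
    exact: group1.
  have oy : #[y] = (p ^ r)%N by rewrite orderE -ht.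
  have p1 := prime_gt1 pp.
  case: r r2 Hh Hc oy => [|[|r']] // _ Hh Hc oy.
  have dp : p %| #[y] by rewrite oy expnS dvdn_mulr.
  have ow : #[y ^+ p] = (p ^ r'.+1)%N by rewrite orderXdiv // oy expnS mulKn ?prime_gt0.
  have : y ^+ p \in hat (Nclass y) by rewrite ht mem_cycle.
  rewrite Hh in_setU in_set1 HD inE => /orP [/eqP E|/eqP E].
    have : #[y ^+ p] = #[y] by rewrite orderE E.
    rewrite ow oy => E'.
    have : p ^ r'.+1 < p ^ r'.+2 by rewrite ltn_exp2l.
    by rewrite -E' ltnn.
  move: ow; rewrite E order1 => E'.
  have : 1 < p ^ r'.+1 by rewrite -(expn0 p) ltn_exp2l.
  by rewrite -E' ltnn.
move: nqn; rewrite /pnat n0 /= => /allPn [p' ]; rewrite mem_primes => /and3P [pp' _ dp'].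
rewrite inE => np'.
have cop : coprime q p' by rewrite prime_coprime // dvdn_prime2 // eq_sym.
have dqp : q * p' %| #[y] by rewrite Gauss_dvd // qn dp'.
set x := y ^+ (#[y] %/ q).
set w := y ^+ (#[y] %/ p').
set u := y ^+ (#[y] %/ (q * p')).
have ox : #[x] = q by apply: orderXdiv2.
have ow : #[w] = p' by apply: orderXdiv2.
have ou : #[u] = (q * p')%N by apply: orderXdiv2.
have xy : x \in <[y]> := mem_cycle _ _.
have wy : w \in <[y]> := mem_cycle _ _.
have uy : u \in <[y]> := mem_cycle _ _.
have nqp : (p' == q) = false by apply/negbTE.
have nqp' : (q == p') = false by rewrite eq_sym.
have wNx : w \notin Nb x.
  by rewrite NbE (cyc_dvd wy xy) (cyc_dvd xy wy) ox ow !dvdn_prime2 // nqp nqp'.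
have Nx : forall z, z \in Nclass x -> <[z]> = <[x]>.
  move=> z zC; have Ez := NbC zC.
  move: wNx; rewrite -Ez NbE negb_or => /andP [wz zw].
  have yNz : y \in Nb z by rewrite Ez NbE xy orbT.
  move: yNz; rewrite NbE => /orP [yz|zy].
    by move: wz; rewrite -cycle_subG in yz; rewrite (subsetP yz).
  have uNz : u \in Nb z by rewrite Ez NbE (cyc_dvd xy uy) ox ou (dvdn_mulr _ (dvdnn q)) orbT.
  move: uNz; rewrite NbE => /orP [uz|zu].
    by move: wz; rewrite -cycle_subG in uz; rewrite (subsetP uz) // (cyc_dvd wy uy) ow ou (dvdn_mull _ (dvdnn p')).
  rewrite (cyc_dvd zy uy) ou in zu.
  have npz : ~~ (p' %| #[z]) by rewrite -ow -(cyc_dvd wy zy).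
  have cz : coprime #[z] p' by rewrite coprime_sym prime_coprime.
  rewrite Gauss_dvdl // in zu.
  have z1 : #[z] != 1%N.
    rewrite order_eq1; apply/eqP => z1.
    have := C1 HS zC z1 => x1; move: ox; rewrite x1 order1 => q1.
    by move: pq; rewrite -q1.
  have oz : #[z] = q by apply/(prime_nt_dvdP pq z1).
  apply/eqP; rewrite eqEcard cycle_subG (cyc_dvd zy xy) oz ox dvdnn /=.
  by change (#[x] <= #[z]); rewrite oz ox.
have nyq : #[y] != q.
  apply/eqP => E; move: dp'; rewrite E dvdn_prime2 // => /eqP E'.
  by move: np'; rewrite E' eqxx.
exists x; split; [|split].
- rewrite Hh in_setU in_set1 HD inE negb_or; apply/andP; split.
    by apply/eqP => E; move: ox; rewrite orderE E -orderE => E'; rewrite E' eqxx in nyq.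
  apply/eqP => E; move: ox; rewrite E order1 => q1.
  by move: pq; rewrite -q1.
- apply: (@leq_trans #|Dclass x|).
    by apply: subset_leq_card; apply/subsetP => z zC; rewrite inE Nx.
  by rewrite HD !card_Dclass ox totient_prime // totient_ge.
- rewrite /padj !is_powE xy andbT; apply/eqP => E.
  by move: ox; rewrite E => E'; rewrite E' eqxx in nyq.
Qed.

End Aux.

Theorem mainTheorem2 (gT : finGroupType) (y : gT) :
  star_class gT = [set 1] ->
  critical (Nclass y) ->
  ((exists x : gT, x \notin hat (Nclass y) /\
       (#|Nclass x| <= #|Nclass y|)%N /\ padj x y)
   <-> first_type (Nclass y)).
Proof.
move=> HS [_ [Hh [p [r [pp [r2 Hc]]]]]].
have nC1 : 1 \notin Nclass y by apply: (notin1 HS pp _ Hh Hc); apply: leq_trans r2.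
split.
  move=> [x [hx [hc ha]]].
  split; first by exists y.
  split.
    by apply/eqP => E; move: nC1; rewrite E HS set11.
  exists y; apply/setP => z; rewrite [in RHS]inE; apply/idP/eqP => [zC|E].
    exact: (fwd HS pp r2 Hh Hc hx hc ha zC).
  by rewrite NclassE (Nb_cycle E).
move=> [_ [_ [x0 E]]].
have HD : Nclass y = Dclass y.
  have : y \in Dclass x0 by rewrite -E Nclass_id.
  rewrite inE => /eqP Ey; rewrite E; apply/setP => z; rewrite !inE Ey //.
exact: (bwd HS pp r2 Hh Hc HD).
Qed.
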